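(* Let $\bm{H}$ be a random matrix with values in $\mathbb{C}^{N_R\times N_T}$ (flat-fading MIMO channel), let $\lambda_{\max}$ be the maximum eigenvalue of $\bm{H}\bm{H}^\ast$, and let $W>0$, $\rho>0$ be constants. Consider the capacity with full channel side information $$c=W\max_{\bm{R}\succeq 0,\ \operatorname{Tr}[\bm{R}]=N_T}\log_2\det\Big(\bm{I}_{N_R}+\frac{\rho}{N_T}\bm{H}\bm{R}\bm{H}^\ast\Big),$$ where the maximum is over Hermitian positive semidefinite $\bm{R}\in\mathbb{C}^{N_T\times N_T}$, and the capacity with channel side information only at the receiver $$c=W\log_2\det\Big(\bm{I}_{N_R}+\frac{\rho}{N_T}\bm{H}\bm{H}^\ast\Big).$$ If $\mathbb{E}[(1+\lambda_{\max})^\theta]<\infty$ for some $\theta>0$, then the distribution of the capacity (in either case) is light-tailed.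
   Context: A nonnegative random variable $X$ is light-tailed if $\Pr(X>x)=O(e^{-\theta x})$ for some $\theta>0$, equivalently $\mathbb{E}[e^{\theta X}]<\infty$ for some $\theta>0$. Here $W$ is the bandwidth and $\rho=P/(N_0W)$ with $P$ the total average transmit power and $N_0$ the noise power spectral density. *)

(* Defs.v *)
From HB Require Import structures.
From mathcomp Require Import all_boot all_order all_algebra.
From mathcomp Require Import all_classical all_reals all_analysis.
From mathcomp Require Import complex.
Set Implicit Arguments. Unset Strict Implicit. Unset Printing Implicit Defensive.
Import Order.TTheory GRing.Theory Num.Theory.
Local Open Scope classical_set_scope.
Local Open Scope ring_scope.

Section Defs.
Variable R : realType.
Local Notation C := (complex R).

Definition ctrmx m n (A : 'M[C]_(m, n)) : 'M[C]_(n, m) := map_mx (@conjc R) A^T.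

Definition psd n (A : 'M[C]_n) : Prop :=
  ctrmx A = A /\ forall v : 'cV[C]_n, 0 <= (ctrmx v *m A *m v) 0 0.

Definition lambda_max n (A : 'M[C]_n) : R :=
  sup [set r : R | eigenvalue A (r%:C)%C].

Definition log2 (x : R) : R := ln x / ln 2.

Definition rate NR NT (W rho : R) (H : 'M[C]_(NR, NT)) (Q : 'M[C]_NT) : R :=
  W * log2 (complex.Re (\det (1%:M + ((rho / NT%:R)%:C)%C *: (H *m Q *m ctrmx H)))).

Definition cap_full NR NT (W rho : R) (H : 'M[C]_(NR, NT)) : R :=
  sup [set rate W rho H Q | Q in [set Q : 'M[C]_NT | psd Q /\ \tr Q = NT%:R]].

Definition cap_rx NR NT (W rho : R) (H : 'M[C]_(NR, NT)) : R :=
  W * log2 (complex.Re (\det (1%:M + ((rho / NT%:R)%:C)%C *: (H *m ctrmx H)))).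

Definition light_tailed d (T : measurableType d) (P : probability T R)
    (X : T -> R) : Prop :=
  measurable_fun setT X /\
  exists theta : R, 0 < theta /\ exists M : R, exists x0 : R,
    forall x : R, x0 <= x -> (P [set w | (x < X w)%R] <= (M * expR (- (theta * x)))%:E)%E.
End Defs.

(* Main.v *)
Require Import Defs.
From HB Require Import structures.
From mathcomp Require Import all_boot all_order all_algebra.
From mathcomp Require Import all_classical all_reals all_analysis.
From mathcomp Require Import complex.
From mathcomp Require Import lra.
Set Implicit Arguments. Unset Strict Implicit. Unset Printing Implicit Defensive.
Import Order.TTheory GRing.Theory Num.Theory.
Import numFieldTopology.Exports numFieldNormedType.Exports.
Local Open Scope classical_set_scope.
Local Open Scope ring_scope.
Local Open Scope sesquilinear_scope.
Section PartA.
Variable C : numClosedFieldType.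

Definition rpsd n (A : 'M[C]_n) := forall u : 'rV_n, 0 <= (u *m A *m u^t*) 0 0.

Lemma ctr_mul m n p (A : 'M[C]_(m, n)) (B : 'M[C]_(n, p)) :
  (A *m B)^t* = B^t* *m A^t*.
Proof. by rewrite trmx_mul map_mxM. Qed.

Lemma row_mul_col_diag m n (M : 'M[C]_(m, n)) (N : 'M[C]_(n, m)) j :
  (row j M *m col j N) 0 0 = (M *m N) j j.
Proof. by rewrite !mxE; apply: eq_bigr => k _; rewrite !mxE. Qed.

Lemma ctr_row n (P : 'M[C]_n) j : (row j P)^t* = col j (P^t*).
Proof. by apply/matrixP => i k; rewrite !mxE. Qed.

Lemma quad_diag n (P A : 'M[C]_n) j :
  (row j P *m A *m (row j P)^t*) 0 0 = (P *m A *m P^t*) j j.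
Proof. by rewrite ctr_row -row_mul row_mul_col_diag. Qed.

Lemma unitary_tV n (P : 'M[C]_n) : P \is unitarymx -> P^t* *m P = 1%:M.
Proof. by move=> Pu; rewrite -invmx_unitary // mulVmx // unitarymx_unit. Qed.

Lemma unitary_Vt n (P : 'M[C]_n) : P \is unitarymx -> P *m P^t* = 1%:M.
Proof. by move/unitarymxP. Qed.

Lemma spec n (A : 'M[C]_n) : A \is hermsymmx -> rpsd A ->
  exists P : 'M[C]_n, exists d : 'rV[C]_n,
    [/\ P \is unitarymx, forall j, 0 <= d 0 j & A = P^t* *m diag_mx d *m P].
Proof.
move=> hA pA; have /orthomx_spectralP eA := hermitian_normalmx hA.
set P := spectralmx A in eA; set d := spectral_diag A in eA.
have Pu : P \is unitarymx by exact: spectral_unitarymx.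
rewrite invmx_unitary // in eA.
exists P, d; split => // j.
have := pA (row j P); rewrite quad_diag eA.
rewrite -!mulmxA unitary_Vt // mulmx1 !mulmxA unitary_Vt // mul1mx.
by rewrite mxE eqxx mulr1n.
Qed.

Section WithSpec.
Variables (n : nat) (P : 'M[C]_n) (d : 'rV[C]_n).
Hypothesis Pu : P \is unitarymx.
Hypothesis d0 : forall j, 0 <= d 0 j.

Lemma spec_det : \det (1%:M + P^t* *m diag_mx d *m P) = \prod_j (1 + d 0 j).
Proof.
have -> : 1%:M + P^t* *m diag_mx d *m P =
   P^t* *m diag_mx (\row_j (1 + d 0 j)) *m P.
  rewrite (_ : diag_mx (\row_j (1 + d 0 j)) = 1%:M + diag_mx d).
    by rewrite mulmxDr mulmxDl mulmx1 unitary_tV.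
  by apply/matrixP => i k; rewrite !mxE; case: eqP => _; rewrite ?mulr1n ?mulr0n ?addr0.
rewrite !det_mulmx det_diag mulrC mulrA -det_mulmx unitary_Vt // det1 mul1r.
by apply: eq_bigr => j _; rewrite mxE.
Qed.

Lemma spec_tr : \tr (P^t* *m diag_mx d *m P) = \sum_j d 0 j.
Proof. by rewrite mxtrace_mulC mulmxA unitary_Vt // mul1mx mxtrace_diag. Qed.

Lemma le_sum_nonneg j : d 0 j <= \sum_k d 0 k.
Proof. by rewrite (bigD1 j) //= lerDl sumr_ge0. Qed.

Lemma spec_det_bounds :
  1 <= \prod_j (1 + d 0 j) <= (1 + \sum_k d 0 k) ^+ n.
Proof.
apply/andP; split.
  rewrite -[X in X <= _](@big1 C 1 *%R 'I_n (index_enum 'I_n) xpredT (fun=> 1)) //.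
  by apply: ler_prod => j _; rewrite ler01 lerDl d0.
rewrite -[n in _ ^+ n]card_ord -prodr_const; apply: ler_prod => j _.
by rewrite addr_ge0 ?ler01 ?d0 //= lerD2l le_sum_nonneg.
Qed.

Lemma spec_eig a : eigenvalue (P^t* *m diag_mx d *m P) a -> exists j, a = d 0 j.
Proof.
move=> /eigenvalueP [v hv v0].
set u := v *m P^t*.
have hu : u *m diag_mx d = a *: u.
  have := congr1 (fun M : 'rV_n => M *m P^t*) hv.
  by rewrite -!mulmxA unitary_Vt // mulmx1 !mulmxA -scalemxAl.
have u0 : u != 0.
  apply: contraNneq v0 => u0; rewrite -[v]mulmx1 -(unitary_tV Pu) mulmxA.
  by rewrite -/u u0 mul0mx.
have : ~~ [forall j, u 0 j == 0].
  by apply: contra u0 => /forallP h; apply/eqP/rowP => j; move: (h j) => /eqP ->; rewrite mxE.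
rewrite negb_forall => /existsP [j uj].
exists j; have := congr1 (fun M : 'rV_n => M 0 j) hu.
rewrite mul_mx_diag mxE [(a *: u) 0 j]mxE [u 0 j * _]mulrC => /(mulIf uj) ->. done.
Qed.

Lemma spec_eig_d j : eigenvalue (P^t* *m diag_mx d *m P) (d 0 j).
Proof.
apply/eigenvalueP; exists (row j P).
  rewrite rowE !mulmxA -[delta_mx 0 j *m P *m P^t*]mulmxA unitary_Vt // mulmx1.
  rewrite mul_mx_diag scalemxAl; congr (_ *m _).
  apply/matrixP => i k; rewrite !mxE (ord1 i) eqxx /=.
  by case: (k =P j) => [->|_]; rewrite ?mulr1n ?mulr0n ?mul1r ?mul0r ?mulr1 ?mulr0.
apply/eqP => r0.
have := congr1 (fun M : 'M[C]_n => M j j) (unitary_Vt Pu).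
rewrite /= -row_mul_col_diag r0 mul0mx !mxE eqxx mulr1n => /eqP.
by rewrite eq_sym oner_eq0.
Qed.

Lemma spec_tr_mul (G : 'M[C]_n) : rpsd G ->
  \tr (P^t* *m diag_mx d *m P *m G) <= \tr (P^t* *m diag_mx d *m P) * \tr G.
Proof.
move=> pG.
have e1 : \tr (P^t* *m diag_mx d *m P *m G) = \sum_j d 0 j * (P *m G *m P^t*) j j.
  rewrite -!mulmxA mxtrace_mulC -!mulmxA mul_diag_mx /mxtrace.
  by apply: eq_bigr => j _; rewrite !mxE.
have g0 j : 0 <= (P *m G *m P^t*) j j by rewrite -quad_diag.
have e2 : \tr G = \sum_j (P *m G *m P^t*) j j.
  by rewrite -[\sum_j _]/(\tr _) mxtrace_mulC mulmxA unitary_tV // mul1mx.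
rewrite e1 spec_tr mulr_suml; apply: ler_sum => j _; apply: ler_wpM2l => //.
by rewrite e2 (bigD1 j) //= lerDl sumr_ge0.
Qed.
End WithSpec.

Lemma rpsd_gram m n (X : 'M[C]_(m, n)) : rpsd (X *m X^t*).
Proof.
move=> u; rewrite mulmxA -mulmxA -ctr_mul mxE; apply: sumr_ge0 => k _.
by rewrite !mxE mul_conjC_ge0.
Qed.

End PartA.
Section PartA2.
Variable R : realType.
Local Notation C := (R[i]).
Local Notation Re := (@complex.Re R).
Local Notation Im := (@complex.Im R).

Lemma ctrmxE m n (A : 'M[C]_(m, n)) : ctrmx A = A ^t*.
Proof. by []. Qed.

Lemma psd_herm n (Q : 'M[C]_n) : psd Q -> Q \is hermsymmx.
Proof.
move=> [hQ _]; rewrite is_hermitianmxE expr0 scale1r; apply/eqP.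
by rewrite -[in LHS]hQ.
Qed.

Lemma psd_rpsd n (Q : 'M[C]_n) : psd Q -> rpsd Q.
Proof.
move=> [_ pQ] u; have := pQ (u^t*); rewrite ctrmxE.
by rewrite trmxCK.
Qed.

Lemma ge0_ReE (x : C) : 0 <= x -> x = (Re x)%:C%C.
Proof. by move=> /ger0_real/RRe_real ->. Qed.

Lemma Re_ge0 (x : C) : 0 <= x -> 0 <= Re x.
Proof. by rewrite lecE => /andP[]. Qed.

Lemma Re_le (x y : C) : x <= y -> Re x <= Re y.
Proof. by rewrite lecE => /andP[]. Qed.

Section Lam.
Variables (n : nat) (A : 'M[C]_n).
Hypotheses (hA : A \is hermsymmx) (pA : rpsd A).

Let S := [set r : R | eigenvalue A (r%:C)%C].

Lemma lam_S_ub : exists P : 'M[C]_n, exists d : 'rV[C]_n,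
  [/\ P \is unitarymx, forall j, 0 <= d 0 j, A = P^t* *m diag_mx d *m P,
      has_ubound S & forall j, S (Re (d 0 j))].
Proof.
have [P [d [Pu d0 eA]]] := spec hA pA.
exists P, d; split => //.
  exists (\sum_j Re (d 0 j)) => r; rewrite /S /= eA => /(spec_eig Pu) [j rj].
  have -> : r = Re (d 0 j) by rewrite -rj.
  by rewrite (bigD1 j) //= lerDl sumr_ge0 // => k _; apply: Re_ge0.
by move=> j; rewrite /S /= -ge0_ReE // eA; apply: spec_eig_d.
Qed.

Lemma lam_ge0 : 0 <= lambda_max A.
Proof.
have [P [d [Pu d0 eA ub Sd]]] := lam_S_ub.
have [[r Sr]|S0] := pselect (S !=set0); last first.
  rewrite /lambda_max -/S (_ : S = set0) ?sup0 //.
  by apply/seteqP; split => // r Sr; apply: S0; exists r.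
have h2 : r <= lambda_max A := ub_le_sup ub Sr.
apply: le_trans h2; move: Sr; rewrite /S /= eA => /(spec_eig Pu) [j rj].
by have := d0 j; rewrite -rj lecR.
Qed.

Lemma lam_tr : Re (\tr A) <= n%:R * lambda_max A.
Proof.
have [P [d [Pu d0 eA ub Sd]]] := lam_S_ub.
rewrite {1}eA spec_tr // raddf_sum mulr_natl -[n in _ *+ n]card_ord -sumr_const.
apply: ler_sum => j _. have := ub_le_sup ub (Sd j). rewrite /lambda_max. done.
Qed.
End Lam.

Lemma herm_gram m n (X : 'M[C]_(m, n)) : X *m X^t* \is hermsymmx.
Proof.
rewrite is_hermitianmxE expr0 scale1r; apply/eqP.
by rewrite -/((X *m X^t*)^t*) ctr_mul trmxCK.
Qed.
End PartA2.
Section PartA3.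
Variable R : realType.
Local Notation C := (R[i]).
Local Notation Re := (@complex.Re R).

Lemma ctr_scale m n (c : C) (A : 'M[C]_(m, n)) : (c *: A)^t* = c^* *: A^t*.
Proof. by apply/matrixP => i j; rewrite !mxE rmorphM. Qed.

Lemma conj_real (x : R) : (x%:C%C)^* = x%:C%C.
Proof. exact: conjc_real. Qed.

Section Bound.
Variables (NR NT : nat) (W rho : R) (H : 'M[C]_(NR, NT)) (Q : 'M[C]_NT).
Hypotheses (W0 : 0 < W) (rho0 : 0 < rho) (pQ : psd Q) (tQ : \tr Q = NT%:R).

Let c := rho / NT%:R.
Let M := (c%:C)%C *: (H *m Q *m H^t*).
Let lam := lambda_max (H *m ctrmx H).

Lemma c_ge0 : 0 <= c.
Proof. by rewrite /c divr_ge0 // ltW. Qed.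

Lemma M_herm : M \is hermsymmx.
Proof.
rewrite is_hermitianmxE expr0 scale1r; apply/eqP.
rewrite -/(M^t*) /M ctr_scale conj_real !ctr_mul trmxCK mulmxA.
have := psd_herm pQ; rewrite is_hermitianmxE expr0 scale1r => /eqP {1}->.
by [].
Qed.

Lemma M_rpsd : rpsd M.
Proof.
move=> u; rewrite /M -scalemxAr -scalemxAl mxE.
apply: mulr_ge0; first by rewrite lecR c_ge0.
have := psd_rpsd pQ (u *m H); rewrite ctr_mul !mulmxA.
by [].
Qed.

Lemma trM_le : Re (\tr M) <= rho * NR%:R * lam.
Proof.
have lam0 : 0 <= lam by apply: lam_ge0; [exact: herm_gram | exact: rpsd_gram].
have hG : rpsd (H^t* *m H).
  by have := rpsd_gram (H^t*); rewrite trmxCK.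
have [P [d [Pu d0 eQ]]] := spec (psd_herm pQ) (psd_rpsd pQ).
have e1 : \tr (H *m Q *m H^t*) = \tr (Q *m (H^t* *m H)).
  by rewrite -mulmxA mxtrace_mulC -mulmxA.
have h1 : \tr (Q *m (H^t* *m H)) <= NT%:R * \tr (H *m H^t*).
  rewrite -tQ [\tr (H *m _)]mxtrace_mulC eQ.
  exact: spec_tr_mul.
have h2 : Re (\tr (Q *m (H^t* *m H))) <= NT%:R * (NR%:R * lam).
  apply: le_trans (Re_le h1) _; rewrite mulr_natl raddfMn /=.
  rewrite -[_ *+ NT]mulr_natl; apply: ler_wpM2l => //; apply: lam_tr; [exact: herm_gram | exact: rpsd_gram].
have cNT : c * NT%:R <= rho.
  rewrite /c; have [->|nz] := eqVneq NT 0%N; first by rewrite mulr0 ltW.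
  by rewrite divfK // pnatr_eq0.
have eRe (x : R) (z : C) : Re (x%:C%C * z) = x * Re z.
  by case: z => a b; rewrite /= mul0r subr0.
rewrite /M mxtraceZ eRe e1.
apply: le_trans (ler_wpM2l c_ge0 h2) _.
have hp : 0 <= NR%:R * lam by rewrite mulr_ge0 // ler0n.
have h3 := ler_wpM2r hp cNT.
apply: le_trans (le_trans _ h3) _; [by rewrite !mulrA lexx | by rewrite !mulrA lexx].
Qed.

Lemma det_bounds :
  let X := Re (\det (1%:M + (rho / NT%:R)%:C%C *: (H *m Q *m ctrmx H))) in
  1 <= X /\ X <= ((1 + rho * NR%:R) * (1 + lam)) ^+ NR.
Proof.
have lam0 : 0 <= lam by apply: lam_ge0; [exact: herm_gram | exact: rpsd_gram].
rewrite -/M /=.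
have [P [d [Pu d0 eM]]] := spec M_herm M_rpsd.
have := spec_det_bounds d0; rewrite -(spec_det _ Pu) -eM => /andP[h1 h2].
have trM : \tr M = \sum_k d 0 k by rewrite eM spec_tr.
have t0 : 0 <= \tr M by rewrite trM sumr_ge0.
have tle := trM_le.
split; first by have := Re_le h1.
apply: le_trans (Re_le h2) _.
set t := Re (\tr M).
rewrite -trM (ge0_ReE t0) -/t (_ : 1 + _ = (1 + t)%:C%C); last by rewrite rmorphD rmorph1.
rewrite -rmorphXn /=.
have rN : 0 <= rho * NR%:R by rewrite mulr_ge0 ?ler0n ?ltW.
apply: lerXn2r.
- by rewrite nnegrE addr_ge0 // Re_ge0.
- by rewrite nnegrE mulr_ge0 // addr_ge0.
apply: (@le_trans _ _ (1 + rho * NR%:R * lam)); first by rewrite lerD2l.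
by nra.
Qed.

Lemma rate_bound :
  rate W rho H Q <= W * (NR%:R * (ln (1 + rho * NR%:R) + ln (1 + lam))) / ln 2.
Proof.
have lam0 : 0 <= lam by apply: lam_ge0; [exact: herm_gram | exact: rpsd_gram].
have rN : 0 <= rho * NR%:R by rewrite mulr_ge0 ?ler0n ?ltW.
rewrite /rate /log2; have [h1 h2] := det_bounds.
move: h1 h2; set X := complex.Re _ => h1 h2.
have a0 : 0 < 1 + rho * NR%:R by rewrite ltr_pwDl.
have l0 : 0 < 1 + lam by rewrite ltr_pwDl.
have X0 : 0 < X by apply: lt_le_trans h1.
have K0 : 0 < ((1 + rho * NR%:R) * (1 + lam)) ^+ NR by rewrite exprn_gt0 // mulr_gt0.
have hl : ln X <= NR%:R * (ln (1 + rho * NR%:R) + ln (1 + lam)).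
  rewrite -(lnM (x:=1 + rho * NR%:R) (y:=1+lam)) ?posrE // mulr_natl -lnXn ?mulr_gt0 //.
  by rewrite ler_ln ?posrE.
have ln20 : 0 <= (ln (2 : R))^-1 by rewrite invr_ge0 ltW // ln_gt0 // ltr1n.
rewrite mulrA; apply: ler_wpM2r => //; apply: ler_wpM2l => //; exact: ltW.
Qed.
End Bound.
End PartA3.
Section PartC.
Variables (R : realType) (d : measure_display) (T : measurableType d).
Local Notation C := (R[i]).
Local Notation Re := (@complex.Re R).
Local Notation Im := (@complex.Im R).

Definition cm (f : T -> C) :=
  measurable_fun setT (fun w => Re (f w)) /\ measurable_fun setT (fun w => Im (f w)).

Lemma cm_cst (c : C) : cm (fun=> c).
Proof. by split; apply: measurable_cst. Qed.

Lemma cm_add f g : cm f -> cm g -> cm (fun w => f w + g w).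
Proof.
move=> [f1 f2] [g1 g2]; split.
- rewrite (_ : (fun w => _) = (fun w => Re (f w) + Re (g w))).
    exact: measurable_realfun.measurable_funD.
  by apply/funext => w; case: (f w) => a b; case: (g w).
- rewrite (_ : (fun w => _) = (fun w => Im (f w) + Im (g w))).
    exact: measurable_realfun.measurable_funD.
  by apply/funext => w; case: (f w) => a b; case: (g w).
Qed.

Lemma cm_opp f : cm f -> cm (fun w => - f w).
Proof.
move=> [f1 f2]; split.
- rewrite (_ : (fun w => _) = (fun w => - Re (f w))).
    exact: measurable_realfun.measurable_funN.
  by apply/funext => w; case: (f w).
- rewrite (_ : (fun w => _) = (fun w => - Im (f w))).
    exact: measurable_realfun.measurable_funN.
  by apply/funext => w; case: (f w).
Qed.

Lemma cm_mul f g : cm f -> cm g -> cm (fun w => f w * g w).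
Proof.
move=> [f1 f2] [g1 g2]; split.
- rewrite (_ : (fun w => _) = (fun w => Re (f w) * Re (g w) - Im (f w) * Im (g w))).
    by apply: measurable_realfun.measurable_funB; apply: measurable_realfun.measurable_funM.
  by apply/funext => w; case: (f w) => a b; case: (g w).
- rewrite (_ : (fun w => _) = (fun w => Re (f w) * Im (g w) + Im (f w) * Re (g w))).
    by apply: measurable_realfun.measurable_funD; apply: measurable_realfun.measurable_funM.
  by apply/funext => w; case: (f w) => a b; case: (g w).
Qed.

Lemma cm_conj f : cm f -> cm (fun w => (f w)^*).
Proof.
move=> [f1 f2]; split.
- by rewrite (_ : (fun w => _) = (fun w => Re (f w))) //; apply/funext => w; case: (f w).
- rewrite (_ : (fun w => _) = (fun w => - Im (f w))); first exact: measurable_realfun.measurable_funN.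
  by apply/funext => w; case: (f w).
Qed.

Lemma cm_sum (I : Type) (r : seq I) (P : pred I) (F : I -> T -> C) :
  (forall i, P i -> cm (F i)) -> cm (fun w => \sum_(i <- r | P i) F i w).
Proof.
move=> hF; elim: r => [|i r IH].
  by under eq_fun do rewrite big_nil; exact: cm_cst.
under eq_fun do rewrite big_cons.
case: (boolP (P i)) => Pi.
  by apply: cm_add => //; apply: hF.
by [].
Qed.

Lemma cm_prod (I : Type) (r : seq I) (P : pred I) (F : I -> T -> C) :
  (forall i, P i -> cm (F i)) -> cm (fun w => \prod_(i <- r | P i) F i w).
Proof.
move=> hF; elim: r => [|i r IH].
  by under eq_fun do rewrite big_nil; exact: cm_cst.
under eq_fun do rewrite big_cons.
case: (boolP (P i)) => Pi.
  by apply: cm_mul => //; apply: hF.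
by [].
Qed.

Definition cmx m n (A : T -> 'M[C]_(m, n)) := forall i j, cm (fun w => A w i j).

Lemma cmx_cst m n (B : 'M[C]_(m, n)) : cmx (fun=> B).
Proof. by move=> i j; apply: cm_cst. Qed.

Lemma cmx_mul m n p (A : T -> 'M[C]_(m, n)) (B : T -> 'M[C]_(n, p)) :
  cmx A -> cmx B -> cmx (fun w => A w *m B w).
Proof.
move=> hA hB i j; under eq_fun do rewrite mxE.
by apply: cm_sum => k _; apply: cm_mul.
Qed.

Lemma cmx_add m n (A B : T -> 'M[C]_(m, n)) :
  cmx A -> cmx B -> cmx (fun w => A w + B w).
Proof. by move=> hA hB i j; under eq_fun do rewrite mxE; apply: cm_add. Qed.

Lemma cmx_scale m n (c : C) (A : T -> 'M[C]_(m, n)) :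
  cmx A -> cmx (fun w => c *: A w).
Proof. by move=> hA i j; under eq_fun do rewrite mxE; apply: cm_mul => //; apply: cm_cst. Qed.

Lemma cmx_ctr m n (A : T -> 'M[C]_(m, n)) : cmx A -> cmx (fun w => ctrmx (A w)).
Proof. by move=> hA i j; under eq_fun do rewrite !mxE; apply: cm_conj. Qed.

Lemma cm_det n (A : T -> 'M[C]_n) : cmx A -> cm (fun w => \det (A w)).
Proof.
move=> hA; rewrite /determinant; apply: cm_sum => s _.
by apply: cm_mul; [apply: cm_cst | apply: cm_prod => i _; apply: hA].
Qed.

Lemma meas_rate NR NT (W rho : R) (H : T -> 'M[C]_(NR, NT)) (Q : 'M[C]_NT) :
  cmx H -> measurable_fun setT (fun w => rate W rho (H w) Q).
Proof.
move=> hH; rewrite /rate /log2.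
apply: measurable_realfun.measurable_funM; first exact: measurable_cst.
apply: measurable_realfun.measurable_funM; last exact: measurable_cst.
apply: measurableT_comp; first exact: measurable_realfun.measurable_ln.
have [h _] := cm_det (cmx_add (cmx_cst 1%:M)
  (cmx_scale ((rho / NT%:R)%:C%C) (cmx_mul (cmx_mul hH (cmx_cst Q)) (cmx_ctr hH)))).
exact: h.
Qed.

Lemma meas_cap_rx NR NT (W rho : R) (H : T -> 'M[C]_(NR, NT)) :
  cmx H -> measurable_fun setT (fun w => cap_rx W rho (H w)).
Proof.
move=> hH; rewrite /cap_rx /log2.
apply: measurable_realfun.measurable_funM; first exact: measurable_cst.
apply: measurable_realfun.measurable_funM; last exact: measurable_cst.
apply: measurableT_comp; first exact: measurable_realfun.measurable_ln.
have [h _] := cm_det (cmx_add (cmx_cst 1%:M)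
  (cmx_scale ((rho / NT%:R)%:C%C) (cmx_mul hH (cmx_ctr hH)))).
exact: h.
Qed.
End PartC.
Section PartD.
Variable R : realType.
Local Notation C := (R[i]).
Local Notation Re := (@complex.Re R).
Local Notation Im := (@complex.Im R).

Definition ccvg (u : nat -> C) (z : C) :=
  (fun n => Re (u n)) @ \oo --> Re z /\ (fun n => Im (u n)) @ \oo --> Im z.

Lemma ReD (x y : C) : Re (x + y) = Re x + Re y. Proof. by case: x; case: y. Qed.
Lemma ImD (x y : C) : Im (x + y) = Im x + Im y. Proof. by case: x; case: y. Qed.
Lemma ReN (x : C) : Re (- x) = - Re x. Proof. by case: x. Qed.
Lemma ImN (x : C) : Im (- x) = - Im x. Proof. by case: x. Qed.
Lemma ReM (x y : C) : Re (x * y) = Re x * Re y - Im x * Im y. Proof. by case: x; case: y. Qed.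
Lemma ImM (x y : C) : Im (x * y) = Re x * Im y + Im x * Re y. Proof. by case: x; case: y. Qed.
Lemma ReJ (x : C) : Re (x^*) = Re x. Proof. by case: x. Qed.
Lemma ImJ (x : C) : Im (x^*) = - Im x. Proof. by case: x. Qed.

Lemma ccvg_cst (z : C) : ccvg (fun=> z) z.
Proof. by split; apply: cvg_cst. Qed.

Lemma ccvg_add u v a b : ccvg u a -> ccvg v b -> ccvg (fun n => u n + v n) (a + b).
Proof.
move=> [u1 u2] [v1 v2]; split.
- have -> : (fun n => Re (u n + v n)) = (fun n => Re (u n) + Re (v n)).
    by apply/funext => n; rewrite ReD.
  by rewrite ReD; exact: cvgD.
- have -> : (fun n => Im (u n + v n)) = (fun n => Im (u n) + Im (v n)).
    by apply/funext => n; rewrite ImD.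
  by rewrite ImD; exact: cvgD.
Qed.

Lemma ccvg_opp u a : ccvg u a -> ccvg (fun n => - u n) (- a).
Proof.
move=> [u1 u2]; split.
- have -> : (fun n => Re (- u n)) = (fun n => - Re (u n)).
    by apply/funext => n; rewrite ReN.
  by rewrite ReN; exact: cvgN.
- have -> : (fun n => Im (- u n)) = (fun n => - Im (u n)).
    by apply/funext => n; rewrite ImN.
  by rewrite ImN; exact: cvgN.
Qed.

Lemma ccvg_mul u v a b : ccvg u a -> ccvg v b -> ccvg (fun n => u n * v n) (a * b).
Proof.
move=> [u1 u2] [v1 v2]; split.
- have -> : (fun n => Re (u n * v n)) =
     (fun n => Re (u n) * Re (v n) + - (Im (u n) * Im (v n))).
    by apply/funext => n; rewrite ReM.
  by rewrite ReM; apply: cvgD; [exact: cvgM | apply: cvgN; exact: cvgM].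
- have -> : (fun n => Im (u n * v n)) =
     (fun n => Re (u n) * Im (v n) + Im (u n) * Re (v n)).
    by apply/funext => n; rewrite ImM.
  by rewrite ImM; apply: cvgD; exact: cvgM.
Qed.

Lemma ccvg_conj u a : ccvg u a -> ccvg (fun n => (u n)^*) a^*.
Proof.
move=> [u1 u2]; split.
- have -> : (fun n => Re ((u n)^*)) = (fun n => Re (u n)).
    by apply/funext => n; rewrite ReJ.
  by rewrite ReJ.
- have -> : (fun n => Im ((u n)^*)) = (fun n => - Im (u n)).
    by apply/funext => n; rewrite ImJ.
  by rewrite ImJ; exact: cvgN.
Qed.

Lemma ccvg_sum (I : Type) (r : seq I) (P : pred I) (F : I -> nat -> C) (G : I -> C) :
  (forall i, P i -> ccvg (F i) (G i)) ->
  ccvg (fun n => \sum_(i <- r | P i) F i n) (\sum_(i <- r | P i) G i).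
Proof.
move=> hF; elim: r => [|i r IH].
  rewrite big_nil; under eq_fun do rewrite big_nil; exact: ccvg_cst.
rewrite big_cons; under eq_fun do rewrite big_cons.
case: (boolP (P i)) => Pi //.
by apply: ccvg_add => //; apply: hF.
Qed.

Lemma ccvg_prod (I : Type) (r : seq I) (P : pred I) (F : I -> nat -> C) (G : I -> C) :
  (forall i, P i -> ccvg (F i) (G i)) ->
  ccvg (fun n => \prod_(i <- r | P i) F i n) (\prod_(i <- r | P i) G i).
Proof.
move=> hF; elim: r => [|i r IH].
  rewrite big_nil; under eq_fun do rewrite big_nil; exact: ccvg_cst.
rewrite big_cons; under eq_fun do rewrite big_cons.
case: (boolP (P i)) => Pi //.
by apply: ccvg_mul => //; apply: hF.
Qed.

Definition mcvg m n (A : nat -> 'M[C]_(m, n)) (B : 'M[C]_(m, n)) :=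
  forall i j, ccvg (fun k => A k i j) (B i j).

Lemma mcvg_cst m n (B : 'M[C]_(m, n)) : mcvg (fun=> B) B.
Proof. by move=> i j; apply: ccvg_cst. Qed.

Lemma mcvg_mul m n p (A : nat -> 'M[C]_(m, n)) (B : nat -> 'M[C]_(n, p)) A0 B0 :
  mcvg A A0 -> mcvg B B0 -> mcvg (fun k => A k *m B k) (A0 *m B0).
Proof.
move=> hA hB i j; rewrite mxE; under eq_fun do rewrite mxE.
by apply: ccvg_sum => k _; apply: ccvg_mul.
Qed.

Lemma mcvg_add m n (A B : nat -> 'M[C]_(m, n)) A0 B0 :
  mcvg A A0 -> mcvg B B0 -> mcvg (fun k => A k + B k) (A0 + B0).
Proof. by move=> hA hB i j; rewrite mxE; under eq_fun do rewrite mxE; apply: ccvg_add. Qed.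

Lemma mcvg_scale m n (c : nat -> C) c0 (A : nat -> 'M[C]_(m, n)) A0 :
  ccvg c c0 -> mcvg A A0 -> mcvg (fun k => c k *: A k) (c0 *: A0).
Proof. by move=> hc hA i j; rewrite mxE; under eq_fun do rewrite mxE; apply: ccvg_mul. Qed.

Lemma mcvg_ctr m n (A : nat -> 'M[C]_(m, n)) A0 :
  mcvg A A0 -> mcvg (fun k => (A k)^t*) (A0^t*).
Proof. by move=> hA i j; rewrite !mxE; under eq_fun do rewrite !mxE; apply: ccvg_conj. Qed.

Lemma ccvg_det n (A : nat -> 'M[C]_n) A0 : mcvg A A0 -> ccvg (fun k => \det (A k)) (\det A0).
Proof.
move=> hA; rewrite /determinant; apply: ccvg_sum => s _.
by apply: ccvg_mul; [apply: ccvg_cst | apply: ccvg_prod => i _; apply: hA].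
Qed.

Lemma ccvg_tr n (A : nat -> 'M[C]_n) A0 : mcvg A A0 -> ccvg (fun k => \tr (A k)) (\tr A0).
Proof. by move=> hA; apply: ccvg_sum => i _; apply: hA. Qed.

Lemma ccvg_real (x : nat -> R) (x0 : R) : x @ \oo --> x0 -> ccvg (fun k => (x k)%:C%C) x0%:C%C.
Proof. by move=> hx; split => //=; apply: cvg_cst. Qed.
End PartD.
Section PartE.
Variable R : realType.
Local Notation C := (R[i]).
Local Notation Re := (@complex.Re R).
Local Notation Im := (@complex.Im R).

Lemma psd_gram n (B : 'M[C]_n) : psd (B *m B^t*).
Proof.
split; first by rewrite ctrmxE ctr_mul trmxCK.
by move=> v; rewrite ctrmxE; have := rpsd_gram B (v^t*); rewrite trmxCK ?mulmxA.
Qed.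

Lemma psd_scale n (c : R) (S : 'M[C]_n) : 0 <= c -> psd S -> psd (c%:C%C *: S).
Proof.
move=> c0 [hS pS]; split; first by rewrite ctrmxE ctr_scale conj_real -ctrmxE hS.
move=> v; rewrite -scalemxAr -scalemxAl mxE mulr_ge0 //; by rewrite lecR.
Qed.

Lemma psd1 n : psd (1%:M : 'M[C]_n).
Proof.
split; first by rewrite ctrmxE trmx1 map_mx1.
move=> v; rewrite mulmx1 mxE; apply: sumr_ge0 => k _.
by rewrite !mxE mulrC mul_conjC_ge0.
Qed.

Lemma tr_gram_ge0 n (B : 'M[C]_n) : 0 <= \tr (B *m B^t*).
Proof.
rewrite /mxtrace; apply: sumr_ge0 => i _; rewrite mxE; apply: sumr_ge0 => k _.
by rewrite !mxE mul_conjC_ge0.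
Qed.

Variable NT : nat.
Local Notation I := ('M[(rat * rat)%type]_NT).

Definition Bof (M : I) : 'M[C]_NT :=
  \matrix_(i, j) ((ratr (M i j).1 : R) +i* (ratr (M i j).2 : R))%C.

Definition Qof (B : 'M[C]_NT) : 'M[C]_NT :=
  if 0 < Re (\tr (B *m B^t*)) then
    ((NT%:R / Re (\tr (B *m B^t*)))%:C%C) *: (B *m B^t*) else 1%:M.

Definition fam (n : nat) : 'M[C]_NT :=
  if @unpickle I n is Some M then Qof (Bof M) else 1%:M.

Lemma Qof_adm B : psd (Qof B) /\ \tr (Qof B) = NT%:R.
Proof.
rewrite /Qof; case: ifPn => t0; last by split; [exact: psd1 | exact: mxtrace1].
split; first by apply: psd_scale; [rewrite divr_ge0 // ltW | exact: psd_gram].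
rewrite mxtraceZ {2}(ge0_ReE (tr_gram_ge0 B)) -rmorphM /= divfK ?gt_eqF //.
by rewrite rmorph_nat.
Qed.

Lemma fam_adm n : psd (fam n) /\ \tr (fam n) = NT%:R.
Proof.
rewrite /fam; case: unpickle => [M|]; first exact: Qof_adm.
by split; [exact: psd1 | exact: mxtrace1].
Qed.
End PartE.
Arguments Bof {R NT}.
Arguments Qof {R NT}.
Arguments fam {R NT}.
Section PartE2.
Variable R : realType.
Local Notation C := (R[i]).
Local Notation Re := (@complex.Re R).
Local Notation Im := (@complex.Im R).

Lemma rat_approx (x : R) : exists q : nat -> rat, (fun k => (ratr (q k) : R)) @ \oo --> x.
Proof.
have h k : exists q : rat, `|x - ratr q| < k.+1%:R^-1.
  set e : R := k.+1%:R^-1.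
  have e0 : 0 < e by rewrite invr_gt0 ltr0n.
  have hxy : x - e < x + e by lra.
  have [q] := rat_in_itvoo hxy; rewrite in_itv /= => /andP[h1 h2].
  by exists q; rewrite ltr_norml; apply/andP; split; lra.
have [f hf] := choice h.
exists f; apply/cvgrPdist_lt => e e0.
apply: filterS (near_infty_natSinv_lt (PosNum e0)) => k hk.
exact: lt_trans (hf k) hk.
Qed.
End PartE2.
Section PartE3.
Variable R : realType.
Local Notation C := (R[i]).
Local Notation Re := (@complex.Re R).
Local Notation Im := (@complex.Im R).

Lemma B_approx NT (B : 'M[C]_NT) :
  exists Mk : nat -> 'M[(rat * rat)%type]_NT, mcvg (fun k => Bof (Mk k)) B.
Proof.
have h (ij : 'I_NT * 'I_NT) : exists q : (nat -> rat) * (nat -> rat),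
    (fun k => (ratr (q.1 k) : R)) @ \oo --> Re (B ij.1 ij.2) /\
    (fun k => (ratr (q.2 k) : R)) @ \oo --> Im (B ij.1 ij.2).
  have [q1 h1] := rat_approx (Re (B ij.1 ij.2)).
  have [q2 h2] := rat_approx (Im (B ij.1 ij.2)).
  by exists (q1, q2).
have [f hf] := choice h.
exists (fun k => \matrix_(i, j) ((f (i, j)).1 k, (f (i, j)).2 k)).
move=> i j; split; rewrite /Bof.
- under eq_fun do rewrite !mxE /=. exact: (hf (i, j)).1.
- under eq_fun do rewrite !mxE /=. exact: (hf (i, j)).2.
Qed.

Lemma psd_factor n (Q : 'M[C]_n) : psd Q -> exists B : 'M[C]_n, Q = B *m B^t*.
Proof.
move=> pQ; have [P [d [Pu d0 eQ]]] := spec (psd_herm pQ) (psd_rpsd pQ).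
set s := \row_j sqrtC (d 0 j).
exists (P^t* *m diag_mx s).
have es : (diag_mx s)^t* = diag_mx s.
  apply/matrixP => i j; rewrite !mxE eq_sym.
  case: eqP => [->|_]; rewrite ?mulr1n ?mulr0n ?conjC0 //.
  by rewrite geC0_conj // sqrtC_ge0.
rewrite ctr_mul trmxCK es eQ -!mulmxA; congr (_ *m _); rewrite !mulmxA; congr (_ *m _).
rewrite mulmx_diag; congr diag_mx; apply/rowP => j; rewrite !mxE -expr2 sqrtCK //.
Qed.
End PartE3.
Section PartE4.
Variable R : realType.
Local Notation C := (R[i]).
Local Notation Re := (@complex.Re R).
Local Notation Im := (@complex.Im R).

Lemma Re_nat n : Re (n%:R : C) = n%:R.
Proof. by elim: n => // n IH; rewrite !mulrS ReD IH. Qed.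

Lemma rate_le_sup NR NT (W rho : R) (H : 'M[C]_(NR, NT)) (Q : 'M[C]_NT) (s : R) :
  0 < W -> 0 < rho -> psd Q -> \tr Q = NT%:R ->
  (forall n, rate W rho H (@fam R NT n) <= s) -> rate W rho H Q <= s.
Proof.
move=> W0 r0 pQ tQ hs.
have [NT0|NTp] := eqVneq NT 0%N.
  have -> : Q = @fam R NT 0.
    by apply/matrixP => i; have := ltn_ord i; rewrite {2}NT0.
  exact: hs.
have [B eQ] := psd_factor pQ.
have [Mk hM] := B_approx B.
pose Sk := fun k => @Bof R NT (Mk k) *m (@Bof R NT (Mk k))^t*.
have hS : mcvg Sk Q by rewrite eQ; apply: mcvg_mul => //; apply: mcvg_ctr.
pose tk := fun k => Re (\tr (Sk k)).
have ht : tk @ \oo --> (NT%:R : R).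
  by have [h _] := ccvg_tr hS; rewrite tQ Re_nat in h.
have nz : (NT%:R : R) != 0 by rewrite pnatr_eq0.
pose ck := fun k => (NT%:R : R) / tk k.
have hc : ck @ \oo --> (1 : R).
  have h := cvgM (cvg_cst (NT%:R : R)) (cvgV nz ht).
  rewrite divff // in h; exact: h.
pose gk := fun k => (ck k)%:C%C *: Sk k.
have hg : mcvg gk Q.
  have := mcvg_scale (ccvg_real hc) hS.
  by rewrite (_ : (1 : R)%:C%C = 1) // scale1r.
have hD := mcvg_add (mcvg_cst 1%:M) (mcvg_scale (ccvg_cst ((rho / NT%:R)%:C%C))
   (mcvg_mul (mcvg_mul (mcvg_cst H) hg) (mcvg_cst (ctrmx H)))).
have [hRe _] := ccvg_det hD.
have [X1 _] := det_bounds H r0 pQ tQ.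
have X0 : 0 < Re (\det (1%:M + (rho / NT%:R)%:C%C *: (H *m Q *m ctrmx H))).
  exact: lt_le_trans X1.
have hln := continuous_cvg _ (continuous_ln X0) hRe.
have hrate : (fun k => rate W rho H (gk k)) @ \oo --> rate W rho H Q.
  rewrite /rate /log2; apply: cvgM; first exact: cvg_cst.
  by apply: cvgM; [exact: hln | exact: cvg_cst].
have ev : \forall k \near \oo, 0 < tk k.
  by apply: (@cvgr_gt _ _ _ _ tk (NT%:R) ht 0); rewrite ltr0n lt0n.
rewrite -(cvg_lim _ hrate) //; apply: limr_le; first by apply/cvg_ex; eexists; exact: hrate.
apply: filterS ev => k tk0.
have -> : gk k = @fam R NT (pickle (Mk k)) by rewrite /fam pickleK /Qof -/(Sk k) -/(tk k) tk0.
exact: hs.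
Qed.
End PartE4.
Section PartF.
Variable R : realType.
Local Notation C := (R[i]).

Lemma le_int_nm d (T : measurableType d) (mu : {measure set T -> \bar R})
  (f g : T -> \bar R) :
  (forall x, (0 <= f x)%E) -> (forall x, (f x <= g x)%E) ->
  (\int[mu]_x f x <= \int[mu]_x g x)%E.
Proof.
move=> f0 fg; have g0 x : (0 <= g x)%E by apply: le_trans (f0 x) (fg x).
rewrite !ge0_integralTE //; apply: ereal_sup_le => _ [h hf <-].
by exists h => //= x; apply: le_trans (hf x) (fg x).
Qed.

Lemma light_from_bound d (T : measurableType d) (P : probability T R)
  (X lam : T -> R) (a b th : R) :
  measurable_fun setT X -> 0 <= b -> 0 < th -> (forall w, 0 <= lam w) ->
  (forall w, X w <= a + b * ln (1 + lam w)) ->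
  (\int[P]_w ((1 + lam w) `^ th)%:E < +oo)%E -> light_tailed P X.
Proof.
move=> mX b0 th0 lam0 hX hI; split => //.
pose b' := b + 1; have b'0 : 0 < b' by rewrite /b' ltr_pwDr.
pose th' := th / b'.
pose Y := fun w => ((1 + lam w) `^ th)%:E.
have Y0 w : (0 <= Y w)%E by rewrite lee_fin powR_ge0.
pose J := fine (\int[P]_w Y w).
have hJ : (\int[P]_w Y w)%E = J%:E.
  rewrite fineK // ge0_fin_numE //; exact: integral_ge0.
exists th'; split; first by rewrite divr_gt0.
exists (J * expR (th' * a)), 0 => x _.
pose A := [set w | x < X w].
have mA : measurable A.
  have := mX measurableT _ (measurable_itv `]x, +oo[).
  rewrite setTI; congr measurable; apply/seteqP; split => w /=;
  by rewrite in_itv /= andbT.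
pose t := expR (th' * (x - a)).
have key w : ((t * \1_A w)%:E <= Y w)%E.
  rewrite indicE; case: (boolP (w \in A)) => wA; last by rewrite mulr0.
  rewrite mulr1 lee_fin.
  have l1 : 0 < 1 + lam w by rewrite ltr_pwDl.
  rewrite -[_ `^ th]lnK ?posrE ?powR_gt0 // ln_powR ler_expR.
  have xa : x - a <= b' * ln (1 + lam w).
    have := hX w; have L0 : 0 <= ln (1 + lam w) by rewrite ln_ge0 // lerDl.
    move: wA; rewrite in_setE /A /= => xX hXw.
    rewrite /b' mulrDl mul1r; lra.
  rewrite /th' mulrAC -mulrA; apply: ler_wpM2l; first exact: ltW.
  by rewrite ler_pdivrMr // mulrC.
have f0 w : (0 <= (t * \1_A w)%:E)%E.
  by rewrite lee_fin mulr_ge0 // ?indic_ge0 // ltW // expR_gt0.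
have h1 := @le_int_nm _ _ P _ _ f0 key.
rewrite (@integralZl_indic _ _ _ P setT measurableT (fun=> A) t) // in h1; last first.
  by move=> /(lt_trans (expR_gt0 (th' * (x - a)))); rewrite ltxx.
rewrite integral_indic // setIT hJ in h1.
have -> : J * expR (th' * a) * expR (- (th' * x)) = t^-1 * J.
  rewrite -mulrA -expRD /t -expRN mulrC; congr (expR _ * _).
  by rewrite mulrBr opprB addrC.
by rewrite EFinM lee_pdivlMl // expR_gt0.
Qed.
End PartF.
Section PartG.
Variable R : realType.
Local Notation C := (R[i]).

Definition bnd NR NT (W rho : R) (H : 'M[C]_(NR, NT)) :=
  W * (NR%:R * (ln (1 + rho * NR%:R) + ln (1 + lambda_max (H *m ctrmx H)))) / ln 2.

Section G1.
Variables (NR NT : nat) (W rho : R) (H : 'M[C]_(NR, NT)).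
Hypotheses (W0 : 0 < W) (rho0 : 0 < rho).

Let S := [set rate W rho H Q | Q in [set Q : 'M[C]_NT | psd Q /\ \tr Q = NT%:R]].

Lemma S_ub : ubound S (bnd W rho H).
Proof. by move=> _ [Q [pQ tQ] <-]; apply: rate_bound. Qed.

Lemma S_ne : S !=set0.
Proof. by exists (rate W rho H (@fam R NT 0)); exists (fam 0) => //; apply: fam_adm. Qed.

Lemma cap_full_le : cap_full W rho H <= bnd W rho H.
Proof. exact: ge_sup S_ne S_ub. Qed.

Lemma fam_ub : ubound (range (fun n => rate W rho H (@fam R NT n))) (bnd W rho H).
Proof. by move=> _ [n _ <-]; have [] := fam_adm R NT n; apply: rate_bound. Qed.

Lemma cap_full_sups :
  cap_full W rho H = sups (fun n => rate W rho H (@fam R NT n)) 0%N.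
Proof.
set u := fun n => _.
have hub : has_ubound (sdrop u 0).
  by exists (bnd W rho H) => _ [k _ <-]; apply: fam_ub; exists k.
apply/eqP; rewrite eq_le; apply/andP; split.
  rewrite /cap_full; apply: ge_sup; first exact: S_ne.
  move=> _ [Q [pQ tQ] <-].
  apply: rate_le_sup => // n; rewrite /sups /=.
  by apply: (ub_le_sup hub); exists n.
rewrite /sups /=; apply: ge_sup; first by exists (u 0%N); exists 0%N.
move=> _ [k _ <-]; apply: ub_le_sup; first by exists (bnd W rho H); exact: S_ub.
by exists (fam k) => //; apply: fam_adm.
Qed.

Lemma cap_rx_le : cap_rx W rho H <= bnd W rho H.
Proof.
have -> : cap_rx W rho H = rate W rho H 1%:M by rewrite /rate mulmx1.
by apply: rate_bound => //; [exact: psd1 | exact: mxtrace1].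
Qed.
End G1.

Lemma bnd_form NR NT (W rho : R) (H : 'M[C]_(NR, NT)) :
  bnd W rho H = W * NR%:R * ln (1 + rho * NR%:R) / ln 2 +
                W * NR%:R / ln 2 * ln (1 + lambda_max (H *m ctrmx H)).
Proof. by rewrite /bnd !mulrDr mulrDl !mulrA [_ / _ * _]mulrAC. Qed.
End PartG.

Theorem theorem1 (R : realType) (d : measure_display) (T : measurableType d)
  (P : probability T R) (NR NT : nat) (H : T -> 'M[complex R]_(NR, NT))
  (W rho : R) :
  (forall i j, measurable_fun setT (fun w => complex.Re (H w i j))) ->
  (forall i j, measurable_fun setT (fun w => complex.Im (H w i j))) ->
  0 < W -> 0 < rho ->
  (exists theta : R, 0 < theta /\
     (\int[P]_w ((1 + lambda_max (H w *m ctrmx (H w))) `^ theta)%:E < +oo)%E) ->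
  light_tailed P (fun w => cap_full W rho (H w)) /\
  light_tailed P (fun w => cap_rx W rho (H w)).
Proof.
move=> hRe hIm W0 rho0 [th [th0 hI]].
have hH : cmx H by move=> i j; split; [exact: hRe | exact: hIm].
pose lam := fun w => lambda_max (H w *m ctrmx (H w)).
have lam0 w : 0 <= lam w by apply: lam_ge0; [exact: herm_gram | exact: rpsd_gram].
pose a := W * NR%:R * ln (1 + rho * NR%:R) / ln 2.
pose b := W * NR%:R / ln 2.
have b0 : 0 <= b by rewrite /b divr_ge0 ?mulr_ge0 ?ler0n ?ltW // ln_gt0 // ltr1n.
split.
- apply: (@light_from_bound _ _ _ P _ lam a b th) => //.
  + rewrite (_ : (fun w => _) = (fun w => sups (fun n => rate W rho (H w) (@fam R NT n)) 0%N)).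
      apply: measurable_realfun.measurable_fun_sups => [w _|n]; last exact: meas_rate.
      by exists (bnd W rho (H w)); apply: fam_ub.
    by apply/funext => w; apply: cap_full_sups.
  + by move=> w; rewrite -bnd_form; apply: cap_full_le.
- apply: (@light_from_bound _ _ _ P _ lam a b th) => //.
  + exact: meas_cap_rx.
  + by move=> w; rewrite -bnd_form; apply: cap_rx_le.
Qed.
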